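(* For any suitable parameters $(m,q,d,\tau)$, the shifted projection protocol $\Pi$ is informative: for every terminal execution $(H,\rho)$ of $\Pi$ and every agent $P$, there is no execution $(H',\rho)$ of $\Pi$ with $H'\ne H$ and $H'_P=H_P$.
   Context: Agents $\mathcal A=\{A,B_1,\dots,B_m\}$ speak in the order $A,B_1,\dots,B_m$. A distribution type is a vector $\tau=(\tau_P)_{P\in\mathcal A}$ of positive integers, $|\tau|=\sum_P\tau_P$; the deck $\Omega$ has $|\tau|$ cards; a deal of type $\tau$ is a partition $H=(H_P)_P$ of $\Omega$ with $|H_P|=\tau_P$. Suitable parameters: $m>1$, $q>m$ a prime power, $d>0$, $|\tau|=q^{d+1}$, $\tau_A=q^{d+1}-q^d$, $\tau_{B_k}>q^{d-1}$ for each $k\in[1,m]$. A transversal hyperplane $V\subseteq\mathbb F_q^{d+1}$ is $\{x: x_{d+1}=a_1x_1+\dots+a_dx_d+b\}$; $\sigma(V)=(a_1,\dots,a_d)$; $\pi$ projects $\mathbb F_q^{d+1}$ onto the first $d$ coordinates; $\pi^V_\downarrow(w)=\pi(w)+\sigma(V)$ for $w\in V$. Shifted projection protocol (tokens: maps $\Omega\to\mathbb F_q^{d+1}$ and subsets of $\mathbb F_q^d$; runs are finite token sequences, $\rho*a$ appends $a$): the maximal executions for deal $H$ are $(H,f,X_1,\dots,X_m)$ with $f:\Omega\to\mathbb F_q^{d+1}$ a bijection such that $V=\mathbb F_q^{d+1}\setminus f[H_A]$ is a transversal hyperplane and $X_k=\pi^V_\downarrow[f[H_{B_k}]]$ for each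 $k$. $\Pi(H,\rho)$ is the set of tokens $a$ such that $(H,\rho*a)$ is an initial segment of a maximal execution. An execution is $(H,a_0,\dots,a_n)$ with $a_k\in\Pi(H,a_0,\dots,a_{k-1})$ for all $k$; it is terminal if $\Pi(H,\rho)=\emptyset$. *)

(* Defs.v *)
From HB Require Import structures.
From mathcomp Require Import all_boot all_order all_algebra all_field.
Set Implicit Arguments. Unset Strict Implicit. Unset Printing Implicit Defensive.
Import GRing.Theory.
Local Open Scope ring_scope.

(* Agents: [None] is A, [Some k] (k : 'I_m) is B_{k+1}.
   Speaking order A, B_1, ..., B_m. *)
Definition agent (m : nat) := option 'I_m.

Section ShiftedProjection.
Variables (F : finFieldType) (d m : nat) (Omega : finType).

Definition vecd1 := 'rV[F]_(d.+1).
Definition vecd := 'rV[F]_d.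

Definition proj (x : 'rV[F]_(d.+1)) : 'rV[F]_d :=
  \row_(i < d) x 0 (widen_ord (leqnSn d) i).

Definition hyperplane (a : 'rV[F]_d) (b : F) : {set 'rV[F]_(d.+1)} :=
  [set x : 'rV[F]_(d.+1) |
     x 0 ord_max == \sum_(i < d) a 0 i * x 0 (widen_ord (leqnSn d) i) + b].

Definition is_deal (tau : agent m -> nat) (H : {ffun agent m -> {set Omega}}) : Prop :=
  [/\ forall P, #|H P| = tau P,
      forall P Q, P != Q -> [disjoint H P & H Q]
    & forall c : Omega, exists P, c \in H P].

Inductive token :=
  | TMap of {ffun Omega -> 'rV[F]_(d.+1)}
  | TSet of {set 'rV[F]_d}.

Definition run := seq token.

(* maximal executions (H, f, X_1, ..., X_m): V = F^{d+1} \ f[H_A] is the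
   transversal hyperplane with coefficients (a, b), so sigma(V) = a, and
   X_k = pi_down^V [f[H_{B_k}]] = { pi(w) + a | w in f[H_{B_k}] }. *)
Definition maximal_run (H : {ffun agent m -> {set Omega}}) (r : run) : Prop :=
  exists (f : {ffun Omega -> 'rV[F]_(d.+1)}) (a : 'rV[F]_d) (b : F),
    [/\ bijective f,
        ~: (f @: H None) = hyperplane a b
      & r = TMap f :: [seq TSet [set proj (f c) + a | c in H (Some k)]
                      | k <- enum 'I_m]].

Definition Pi (H : {ffun agent m -> {set Omega}}) (rho : run) (a : token) : Prop :=
  exists s : run, maximal_run H (rcons rho a ++ s).

Definition is_execution (tau : agent m -> nat)
    (H : {ffun agent m -> {set Omega}}) (rho : run) : Prop :=
  is_deal tau H /\
  forall k, (k < size rho)%N -> Pi H (take k rho) (nth (TSet set0) rho k).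

Definition is_terminal (H : {ffun agent m -> {set Omega}}) (rho : run) : Prop :=
  forall a, ~ Pi H rho a.

Definition informative (tau : agent m -> nat) : Prop :=
  forall (H : {ffun agent m -> {set Omega}}) (rho : run),
    is_execution tau H rho -> is_terminal H rho ->
    forall (P : agent m) (H' : {ffun agent m -> {set Omega}}),
      is_execution tau H' rho -> H' P = H P -> H' = H.

End ShiftedProjection.

Definition suitable (F : finFieldType) (m d : nat) (Omega : finType)
    (tau : agent m -> nat) : Prop :=
  let q := #|F| in
  [/\ (1 < m)%N /\ (m < q)%N /\ (0 < d)%N,
      forall P, (0 < tau P)%N,
      (\sum_(P : agent m) tau P)%N = (q ^ d.+1)%N /\ #|Omega| = (q ^ d.+1)%N,
      tau None = (q ^ d.+1 - q ^ d)%N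
    & forall k : 'I_m, (q ^ d.-1 < tau (Some k))%N].

(* Main.v *)
Require Import Defs.
From mathcomp Require Import all_boot all_order all_algebra all_field.
From mathcomp Require Import ring.
Set Implicit Arguments. Unset Strict Implicit. Unset Printing Implicit Defensive.
Import GRing.Theory.
Local Open Scope ring_scope.

Section Aux.
Variables (F : finFieldType) (d : nat).

Local Notation prj := (@proj F d).

Definition pt (y : 'rV[F]_d) (v : F) : 'rV[F]_(d.+1) :=
  \row_(j < d.+1) oapp (fun i => y 0 i) v (unlift ord_max j).

Lemma unlift_widen (i : 'I_d) : unlift ord_max (widen_ord (leqnSn d) i) = Some i.
Proof.
have -> : widen_ord (leqnSn d) i = lift ord_max i by apply: val_inj; exact: (esym (lift_max i)).
by rewrite liftK.
Qed.

Lemma pt_max y v : pt y v 0 ord_max = v.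
Proof. by rewrite mxE unlift_none. Qed.

Lemma pt_widen y v i : pt y v 0 (widen_ord (leqnSn d) i) = y 0 i.
Proof. by rewrite mxE unlift_widen. Qed.

Lemma prj_pt y v : prj (pt y v) = y.
Proof. by apply/rowP => i; rewrite mxE pt_widen. Qed.

Lemma prj_E (x : 'rV[F]_(d.+1)) i : x 0 (widen_ord (leqnSn d) i) = prj x 0 i.
Proof. by rewrite mxE. Qed.

Lemma in_hyp x (a : 'rV[F]_d) b :
  (x \in hyperplane a b) = (x 0 ord_max == \sum_(i < d) a 0 i * prj x 0 i + b).
Proof.
rewrite inE; congr (_ == _ + _); apply: eq_bigr => i _; by rewrite mxE.
Qed.

Lemma row_ext (x y : 'rV[F]_(d.+1)) :
  prj x = prj y -> x 0 ord_max = y 0 ord_max -> x = y.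
Proof.
move=> hp hm; apply/rowP => j.
case: (ltnP j d) => hj.
  have -> : j = widen_ord (leqnSn d) (Ordinal hj) by apply: val_inj.
  by rewrite !prj_E hp.
have -> : j = ord_max by apply: val_inj => /=; apply/eqP; rewrite eqn_leq hj -ltnS ltn_ord.
by [].
Qed.

Lemma on_hyp_eq x y (a : 'rV[F]_d) b : x \in hyperplane a b -> y \in hyperplane a b ->
  prj x = prj y -> x = y.
Proof.
rewrite !in_hyp => /eqP hx /eqP hy hp; apply: row_ext => //.
by rewrite hx hy hp.
Qed.

Lemma pt_in y (a : 'rV[F]_d) b : pt y (\sum_(i < d) a 0 i * y 0 i + b) \in hyperplane a b.
Proof. by rewrite in_hyp prj_pt pt_max. Qed.

Lemma hyp_inj (a a' : 'rV[F]_d) b b' : hyperplane a b = hyperplane a' b' -> a = a' /\ b = b'.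
Proof.
move=> e.
have key (y : 'rV[F]_d) : \sum_(i < d) a 0 i * y 0 i + b = \sum_(i < d) a' 0 i * y 0 i + b'.
  have := pt_in y a b; rewrite e in_hyp prj_pt pt_max => /eqP //.
have hb : b = b'.
  by have := key 0; rewrite !big1 ?add0r // => i _; rewrite mxE mulr0.
split=> //; apply/rowP => i.
have := key (delta_mx 0 i); rewrite hb => /addIr.
rewrite (bigD1 i) //= (bigD1 i (P := predT)) //= !mxE !eqxx !mulr1.
rewrite !big1 ?addr0 // => j /negbTE hj; by rewrite mxE hj andbF mulr0.
Qed.

Lemma card_hyp (a : 'rV[F]_d) b : #|hyperplane a b| = (#|F| ^ d)%N.
Proof.
have e : prj @: hyperplane a b = [set: 'rV[F]_d].
  apply/setP => y; rewrite inE; apply/imsetP; exists (pt y (\sum_(i < d) a 0 i * y 0 i + b)).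
    exact: pt_in.
  by rewrite prj_pt.
rewrite -(card_in_imset (f := prj)); last first.
  by move=> x y hx hy; apply: on_hyp_eq hx hy.
by rewrite e cardsT card_mx mul1n.
Qed.

End Aux.

Section Aux2.
Variables (F : finFieldType) (d : nat).
Definition dot (c y : 'rV[F]_d) := \sum_(i < d) c 0 i * y 0 i.

Lemma dotDZ c y t u : dot c (y + t *: u) = dot c y + t * dot c u.
Proof.
rewrite /dot mulr_sumr -big_split; apply: eq_bigr => i _.
by rewrite !mxE mulrDr mulrCA.
Qed.

Lemma card_affine (c : 'rV[F]_d) (e : F) : c != 0 ->
  (#|[set y : 'rV[F]_d | dot c y == e]| * #|F| <= #|F| ^ d)%N.
Proof.
move=> c0.
have [i0 hi0] : exists i0, c 0 i0 != 0.
  apply/existsP; apply: contraR c0 => /existsPn h; apply/eqP/rowP => i.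
  by rewrite mxE; apply/eqP; move/negPn: (h i).
pose u : 'rV[F]_d := \row_i (if i == i0 then (c 0 i0)^-1 else 0).
have du : dot c u = 1.
  rewrite /dot (bigD1 i0) //= big1 ?addr0; first by rewrite mxE eqxx mulfV.
  by move=> j /negbTE hj; rewrite mxE hj mulr0.
set S := [set y | _].
have hT : #|[set: 'rV[F]_d]| = (#|F| ^ d)%N by rewrite cardsT card_mx mul1n.
rewrite -hT -cardsT -cardsX.
rewrite -(card_in_imset (f := fun p : 'rV[F]_d * F => p.1 + p.2 *: u)).
  by rewrite cardsT; exact: max_card.
move=> [y1 t1] [y2 t2] /setXP [h1 _] /setXP [h2 _] /= he.
rewrite !inE in h1 h2.
have ht : t1 = t2.
  have := congr1 (dot c) he; rewrite !dotDZ du (eqP h1) (eqP h2) !mulr1.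
  exact: addrI.
by move: he; rewrite ht => /addIr ->.
Qed.
End Aux2.

Lemma bij_exists (T U : finType) (u0 : U) (A : {set T}) (W : {set U}) :
  #|T| = #|U| -> #|A| = #|W| ->
  exists f : {ffun T -> U}, bijective f /\ f @: A = W.
Proof.
move=> hTU hAW.
have hAWc : #|~: A| = #|~: W|.
  by apply/eqP; rewrite -(eqn_add2l #|A|) cardsC hAW cardsC hTU.
pose g (c : T) := if c \in A then nth u0 (enum W) (index c (enum A))
                  else nth u0 (enum (~: W)) (index c (enum (~: A))).
have gA c : c \in A -> g c \in W.
  move=> hc; rewrite /g hc -mem_enum mem_nth //.
  by rewrite -cardE -hAW cardE index_mem mem_enum.
have gC c : c \notin A -> g c \in ~: W.
  move=> hc; rewrite /g (negbTE hc) -mem_enum mem_nth //.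
  by rewrite -cardE -hAWc cardE index_mem mem_enum inE.
have ginj : injective g.
  move=> c1 c2 he.
  case: (boolP (c1 \in A)) => h1; case: (boolP (c2 \in A)) => h2.
  - move: he; rewrite /g h1 h2 => /eqP; rewrite nth_uniq ?enum_uniq //; last 2 first.
      by rewrite -cardE -hAW cardE index_mem mem_enum.
      by rewrite -cardE -hAW cardE index_mem mem_enum.
    by move/eqP; apply: (index_inj c1); rewrite mem_enum.
  - by have := gA _ h1; have := gC _ h2; rewrite he inE => /negP.
  - by have := gA _ h2; have := gC _ h1; rewrite he inE => /negP.
  - move: he; rewrite /g (negbTE h1) (negbTE h2) => /eqP; rewrite nth_uniq ?enum_uniq //; last 2 first.
      by rewrite -cardE -hAWc cardE index_mem mem_enum inE.
      by rewrite -cardE -hAWc cardE index_mem mem_enum inE.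
    by move/eqP; apply: (index_inj c1); rewrite mem_enum inE.
exists [ffun c => g c].
have fE : [ffun c => g c] =1 g by move=> c; rewrite ffunE.
have finj : injective [ffun c => g c] by move=> x y; rewrite !fE; apply: ginj.
split; first by apply: (inj_card_bij finj); rewrite hTU.
apply/eqP; rewrite eqEcard (card_imset _ finj) hAW leqnn andbT.
by apply/subsetP => y /imsetP [c hc ->]; rewrite fE gA.
Qed.
Section Main.
Variables (F : finFieldType) (d m : nat) (Omega : finType).
Local Notation prj := (@proj F d).
Implicit Types H : {ffun agent m -> {set Omega}}.

Lemma disj_notin H k c : (forall P Q, P != Q -> [disjoint H P & H Q]) ->
  c \in H (Some k) -> c \notin H None.
Proof. by move=> hd hc; rewrite (disjointFr (hd (Some k) None isT) hc). Qed.

Lemma inV H (f : {ffun Omega -> 'rV[F]_(d.+1)}) a b k c :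
  injective f -> ~: (f @: H None) = hyperplane a b ->
  (forall P Q, P != Q -> [disjoint H P & H Q]) ->
  c \in H (Some k) -> f c \in hyperplane a b.
Proof.
move=> fi hV hd hc; rewrite -hV inE mem_imset //; exact: disj_notin hc.
Qed.

Lemma sub_help H H' (f : {ffun Omega -> 'rV[F]_(d.+1)}) a b k :
  injective f -> ~: (f @: H None) = hyperplane a b -> ~: (f @: H' None) = hyperplane a b ->
  (forall P Q, P != Q -> [disjoint H P & H Q]) ->
  (forall P Q, P != Q -> [disjoint H' P & H' Q]) ->
  [set prj (f c) + a | c in H (Some k)] = [set prj (f c) + a | c in H' (Some k)] ->
  H' (Some k) \subset H (Some k).
Proof.
move=> fi hV hV' hd hd' e; apply/subsetP => c hc.
have : prj (f c) + a \in [set prj (f c) + a | c in H (Some k)].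
  by rewrite e; apply/imsetP; exists c.
case/imsetP => c0 hc0 /addIr ep.
have := on_hyp_eq (inV fi hV' hd' hc) (inV fi hV hd hc0) ep.
by move/fi => ->.
Qed.

Lemma caseA H H' (f : {ffun Omega -> 'rV[F]_(d.+1)}) a b a' b' :
  injective f -> ~: (f @: H None) = hyperplane a b -> ~: (f @: H' None) = hyperplane a' b' ->
  (forall P Q, P != Q -> [disjoint H P & H Q]) ->
  (forall P Q, P != Q -> [disjoint H' P & H' Q]) ->
  (forall k, [set prj (f c) + a | c in H (Some k)] = [set prj (f c) + a' | c in H' (Some k)]) ->
  H' None = H None -> H' = H.
Proof.
move=> fi hV hV' hd hd' e hN.
have [ea eb] : a = a' /\ b = b' by apply: hyp_inj; rewrite -hV -hV' hN.
subst a' b'.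
apply/ffunP => [[k|]] //; apply/eqP; rewrite eqEsubset.
rewrite (sub_help fi hV hV' hd hd' (e k)) /=.
exact: (sub_help fi hV' hV hd' hd (esym (e k))).
Qed.

Lemma dotB (a a' y : 'rV[F]_d) : dot (a - a') y = dot a y - dot a' y.
Proof.
rewrite /dot -sumrB; apply: eq_bigr => i _; by rewrite !mxE mulrBl.
Qed.

Lemma core H H' (f : {ffun Omega -> 'rV[F]_(d.+1)}) a b a' b' :
  (0 < d)%N ->
  injective f -> ~: (f @: H None) = hyperplane a b -> ~: (f @: H' None) = hyperplane a' b' ->
  (forall P Q, P != Q -> [disjoint H P & H Q]) ->
  (forall P Q, P != Q -> [disjoint H' P & H' Q]) ->
  (forall k, [set prj (f c) + a | c in H (Some k)] = [set prj (f c) + a' | c in H' (Some k)]) ->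
  (forall k, (#|F| ^ d.-1 < #|H (Some k)|)%N) ->
  forall P, H' P = H P -> H' = H.
Proof.
move=> d0 fi hV hV' hd hd' e hcard [j|]; last exact: caseA fi hV hV' hd hd' e.
move=> hj.
have both c : c \in H (Some j) -> f c \in hyperplane a b /\ f c \in hyperplane a' b'.
  move=> hc; split; first exact: inV fi hV hd hc.
  by apply: (inV (k:=j) fi hV' hd'); rewrite hj.
have ea : a = a'.
  apply/eqP; apply/negPn/negP => ne.
  have ne' : a - a' != 0 by rewrite subr_eq0.
  have := card_affine (b' - b) ne'.
  set S := [set y | _].
  have sub : prj @: (f @: H (Some j)) \subset S.
    apply/subsetP => y /imsetP [x /imsetP [c hc ->] ->].
    have [h1 h2] := both c hc.
    rewrite !in_hyp in h1 h2.
    rewrite inE dotB; apply/eqP.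
    move: h1 h2 => /eqP -> /eqP e1.
    rewrite -/(dot a _) -/(dot a' _) in e1.
    have -> : dot a (prj (f c)) = dot a' (prj (f c)) + b' - b by rewrite -e1 addrK.
    by ring.
  have hc1 : #|prj @: (f @: H (Some j))| = #|H (Some j)|.
    rewrite card_in_imset; first exact: card_imset _ fi.
    move=> x y /imsetP [c1 hc1 ->] /imsetP [c2 hc2 ->] ep.
    exact: on_hyp_eq (proj1 (both _ hc1)) (proj1 (both _ hc2)) ep.
  have := subset_leq_card sub; rewrite hc1 => hle hS.
  have := hcard j; rewrite ltnNge; move/negP; apply.
  apply: leq_trans hle _.
  have q0 : (0 < #|F|)%N by apply/card_gt0P; exists 0.
  rewrite -(leq_pmul2r q0) -expnSr prednK //.
subst a'.
have [c hc] : exists c, c \in H (Some j).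
  by apply/set0Pn; rewrite -card_gt0; apply: leq_ltn_trans (hcard j).
have [h1 h2] := both c hc.
rewrite !in_hyp in h1 h2.
have eb : b = b' by move: h1 h2 => /eqP -> /eqP /addrI.
subst b'.
apply: (caseA fi hV hV' hd hd' e).
apply: (imset_inj fi); apply: setC_inj; by rewrite hV hV'.
Qed.
End Main.

Section Main2.
Variables (F : finFieldType) (d m : nat) (Omega : finType).
Implicit Types H : {ffun agent m -> {set Omega}}.

Lemma max_size H (r : run F d Omega) : maximal_run H r -> size r = m.+1.
Proof. by case=> f [a [b [_ _ ->]]]; rewrite /= size_map size_enum_ord. Qed.

Lemma exec_max tau H (rho : run F d Omega) : is_execution tau H rho -> (0 < size rho)%N ->
  exists s, maximal_run H (rho ++ s).
Proof.
case=> _ hx ne.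
have hs : ((size rho).-1 < size rho)%N by rewrite prednK.
have [s hs'] := hx _ hs; exists s.
by rewrite -(take_nth (@TSet F d Omega set0) hs) prednK ?take_size in hs'.
Qed.

Lemma max_exists tau H : is_deal tau H -> #|Omega| = (#|F| ^ d.+1)%N ->
  tau None = (#|F| ^ d.+1 - #|F| ^ d)%N -> exists r : run F d Omega, maximal_run H r.
Proof.
case=> hc _ _ hO hN.
have cW : #|H None| = #|~: hyperplane (0 : 'rV[F]_d) 0|.
  apply/eqP; rewrite -(eqn_add2l #|hyperplane (0 : 'rV[F]_d) 0|) cardsC card_hyp.
  have q0 : (0 < #|F|)%N by apply/card_gt0P; exists 0.
  have le : (#|F| ^ d <= #|F| ^ d.+1)%N by rewrite expnS leq_pmull.
  rewrite hc hN subnKC //.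
  by rewrite card_mx mul1n.
have hT : #|Omega| = #|'rV[F]_d.+1| by rewrite hO card_mx mul1n.
have [f [fb fe]] := bij_exists 0 hT cW.
exists (TMap f :: [seq @TSet F d Omega [set proj (f c) + 0 | c in H (Some k)] | k <- enum 'I_m]).
exists f; exists 0; exists 0; split => //.
by rewrite fe setCK.
Qed.
End Main2.

Theorem mainTheorem9 (F : finFieldType) (m d : nat) (Omega : finType)
    (tau : agent m -> nat) :
  suitable F d Omega tau -> informative F d Omega tau.
Proof.
move=> [[hm [hq d0]] htau [hsum hO] hA hB] H rho exH term P H' exH' hP.
have hpos : (0 < size rho)%N.
  rewrite lt0n; apply/negP => /eqP /size0nil e0; subst rho.
  case: (max_exists (proj1 exH) hO hA) => [[|a s] hr]; first by have := max_size hr.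
  by apply: (term a); exists s.
have maxH : maximal_run H rho.
  have [s hs] := exec_max exH hpos.
  case: s hs => [|a s] hs; first by rewrite cats0 in hs.
  by exfalso; apply: (term a); exists s; rewrite cat_rcons.
have maxH' : maximal_run H' rho.
  have [s hs] := exec_max exH' hpos.
  have := max_size hs; rewrite size_cat (max_size maxH) => /eqP.
  rewrite -[X in _ == X]addn0 eqn_add2l => /eqP /size0nil e.
  by rewrite e cats0 in hs.
case: maxH => f [a [b [fb hV erho]]].
case: maxH' => f' [a' [b' [fb' hV' erho']]].
rewrite erho in erho'; case: erho' => ef emap; subst f'.
have fi : injective f := bij_inj fb.
case: exH => [[hc hd _] _]; case: exH' => [[hc' hd' _] _].
apply: (core d0 fi hV hV' hd hd' _ _ hP).
  move=> k; have := (eq_in_map _ _ _).2 emap k (mem_enum _ k).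
  by case.
by move=> k; rewrite hc; apply: hB.
Qed.
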